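(* Let $R$ be a commutative ring and $\mathbf n=(n_1,\dots,n_s)$ positive integers with $\sum n_i=n$. Then $H^i(\mathcal{P}_{\mathbf n}(R),\mathrm{M}_n(R)/\mathcal{P}_{\mathbf n}(R))=0$ for all $i\ge0$.
   Context: $\mathcal{P}_{\mathbf n}(R)=\{(a_{ij})\in\mathrm{M}_n(R)\mid a_{ij}=0 \text{ if } \sum_{k\le t}n_k<i\le\sum_{k\le t+1}n_k \text{ and } j\le\sum_{k\le t}n_k\}$, the block upper triangular matrices with diagonal blocks of sizes $n_1,\dots,n_s$. $H^i$ is Hochschild cohomology; $\mathrm{M}_n(R)/\mathcal{P}_{\mathbf n}(R)$ is a bimodule via matrix multiplication. *)

(* Defs.v *)
From HB Require Import structures.
From mathcomp Require Import all_boot all_order all_algebra.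
Set Implicit Arguments. Unset Strict Implicit. Unset Printing Implicit Defensive.
Import Order.TTheory GRing.Theory Num.Theory.
Local Open Scope ring_scope.

(* Hochschild cohomology of an R-algebra A (given as a predicate on an  *)
(* R-module T, closed under mulA) with coefficients in an A-bimodule M  *)
(* (given as a predicate on an R-module U, with actions lact / ract).   *)
(* An i-cochain is an R-multilinear map A^i -> M; we represent tuples   *)
(* (a_0,...,a_{i-1}) as functions nat -> T, and require the cochain to  *)
(* depend only on the first i arguments.                                *)
Section Hochschild.
Variables (R : comPzRingType) (T U : lmodType R).
Variables (mulA : T -> T -> T) (A : pred T) (M : pred U).
Variables (lact : T -> U -> U) (ract : U -> T -> U).

Definition setarg (a : nat -> T) (j : nat) (x : T) : nat -> T :=
  fun k => if k == j then x else a k.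

Definition inA (i : nat) (a : nat -> T) : Prop := forall k, (k < i)%N -> a k \in A.

Definition hcochain (i : nat) (f : (nat -> T) -> U) : Prop :=
  [/\ (forall a b, (forall k, (k < i)%N -> a k = b k) -> f a = f b),
      (forall a, inA i a -> f a \in M) &
      (forall a j x y (r : R), (j < i)%N -> inA i a -> x \in A -> y \in A ->
         f (setarg a j (r *: x + y)) = r *: f (setarg a j x) + f (setarg a j y))].

Definition hcobound (i : nat) (f : (nat -> T) -> U) (a : nat -> T) : U :=
  lact (a 0%N) (f (fun k => a k.+1))
  + \sum_(j < i) (-1) ^+ j.+1 *:
       f (fun k => if (k < j)%N then a k
                   else if k == j then mulA (a j) (a j.+1) else a k.+1)
  + (-1) ^+ i.+1 *: ract (f a) (a i).

Definition HH_vanishes (i : nat) : Prop :=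
  match i with
  | 0 => forall m, m \in M -> (forall a, a \in A -> lact a m = ract m a) -> m = 0
  | j.+1 => forall f, hcochain j.+1 f ->
              (forall a, inA j.+2 a -> hcobound j.+1 f a = 0) ->
              exists g, hcochain j g /\ (forall a, inA j.+1 a -> f a = hcobound j g a)
  end.
End Hochschild.

Section Blocks.
Variables (R : comPzRingType) (n : nat) (ns : seq nat).

Definition cum (t : nat) : nat := sumn (take t ns).

(* (i,j) (0-based) lies in the forced-zero region of P_n:
   sum_{k<=t} n_k < i+1 <= sum_{k<=t+1} n_k and j+1 <= sum_{k<=t} n_k *)
Definition blkzero (i j : 'I_n) : bool :=
  [exists t : 'I_(size ns), [&& (cum t <= i)%N, (i < cum t.+1)%N & (j < cum t)%N]].

Definition Pn : pred 'M[R]_n :=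
  [pred B : 'M[R]_n | [forall i, forall j, blkzero i j ==> (B i j == 0)]].

(* M_n(R)/P_n(R) is modelled by its canonical complement: matrices supported
   on the forced-zero region; proj is the quotient map (kernel = P_n). *)
Definition Qn : pred 'M[R]_n :=
  [pred B : 'M[R]_n | [forall i, forall j, ~~ blkzero i j ==> (B i j == 0)]].

Definition projQ (B : 'M[R]_n) : 'M[R]_n :=
  \matrix_(i, j) if blkzero i j then B i j else 0.

Definition lactQ (a m : 'M[R]_n) : 'M[R]_n := projQ (a *m m).
Definition ractQ (m a : 'M[R]_n) : 'M[R]_n := projQ (m *m a).
End Blocks.

(* Main.v *)
Require Import Defs.
From HB Require Import structures.
From mathcomp Require Import all_boot all_order all_algebra.
From Stdlib Require Import FunctionalExtensionality.
From mathcomp Require Import zify.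
Set Implicit Arguments. Unset Strict Implicit. Unset Printing Implicit Defensive.
Import Order.TTheory GRing.Theory Num.Theory.
Local Open Scope ring_scope.

Lemma lin0 (R : pzRingType) (V W : lmodType R) (f : V -> W) :
  (forall r x y, f (r *: x + y) = r *: f x + f y) -> f 0 = 0.
Proof.
move=> lin; have h := lin 1 0 0; rewrite !scale1r addr0 in h.
have: f 0 + f 0 - f 0 = f 0 - f 0 by rewrite -h.
by rewrite addrK subrr.
Qed.
Lemma linD (R : pzRingType) (V W : lmodType R) (f : V -> W) :
  (forall r x y, f (r *: x + y) = r *: f x + f y) -> forall x y, f (x + y) = f x + f y.
Proof. by move=> lin x y; rewrite -(scale1r x) lin !scale1r. Qed.
Lemma linZ (R : pzRingType) (V W : lmodType R) (f : V -> W) :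
  (forall r x y, f (r *: x + y) = r *: f x + f y) -> forall r x, f (r *: x) = r *: f x.
Proof. by move=> lin r x; rewrite -(addr0 (r *: x)) lin (lin0 lin) addr0. Qed.

Lemma lin_sum (R : pzRingType) (V W : lmodType R) (f : V -> W) :
  (forall r x y, f (r *: x + y) = r *: f x + f y) ->
  forall (I : Type) (r : seq I) (P : pred I) (g : I -> V),
  f (\sum_(i <- r | P i) g i) = \sum_(i <- r | P i) f (g i).
Proof.
move=> lin I r P g.
elim/big_rec2: _ => [|i y1 y2 _ <-]; first exact: lin0.
exact: linD.
Qed.

Section Abs.
Variables (R : comPzRingType) (T U : lmodType R).
Variables (mul : T -> T -> T) (A : pred T) (M : pred U).
Variables (lact : T -> U -> U) (ract : U -> T -> U).
Variables (s : nat) (e : 'I_s -> T).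

Hypothesis mul_linl : forall r x y z, mul (r *: x + y) z = r *: mul x z + mul y z.
Hypothesis mul_linr : forall r x y z, mul x (r *: y + z) = r *: mul x y + mul x z.
Hypothesis mulA : forall x y z, mul (mul x y) z = mul x (mul y z).
Hypothesis A_mul : forall x y, x \in A -> y \in A -> mul x y \in A.
Hypothesis A_lin : forall r x y, x \in A -> y \in A -> r *: x + y \in A.
Hypothesis A0 : 0 \in A.
Hypothesis eA : forall t, e t \in A.
Hypothesis e_mul : forall t u, mul (e t) (e u) = if t == u then e t else 0.
Hypothesis sum_el : forall x, \sum_t mul (e t) x = x.
Hypothesis sum_er : forall x, \sum_t mul x (e t) = x.
Hypothesis e_tri : forall x (u v : 'I_s), x \in A -> (v < u)%N -> mul (mul (e u) x) (e v) = 0.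
Hypothesis lact_linl : forall r x y m, lact (r *: x + y) m = r *: lact x m + lact y m.
Hypothesis lact_linr : forall r x m m', lact x (r *: m + m') = r *: lact x m + lact x m'.
Hypothesis ract_linl : forall r m m' x, ract (r *: m + m') x = r *: ract m x + ract m' x.
Hypothesis ract_linr : forall r m x y, ract m (r *: x + y) = r *: ract m x + ract m y.
Hypothesis lactA : forall x y m, x \in A -> lact x (lact y m) = lact (mul x y) m.
Hypothesis ractA : forall m x y, y \in A -> ract (ract m x) y = ract m (mul x y).
Hypothesis lractC : forall x m y, x \in A -> y \in A -> lact x (ract m y) = ract (lact x m) y.
Hypothesis lact_M : forall x m, lact x m \in M.
Hypothesis ract_M : forall m x, ract m x \in M.
Hypothesis M0 : 0 \in M.
Hypothesis M_lin : forall r m m', m \in M -> m' \in M -> r *: m + m' \in M.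
Hypothesis sum_lact : forall m, m \in M -> \sum_t lact (e t) m = m.
Hypothesis sum_ract : forall m, m \in M -> \sum_t ract m (e t) = m.
Hypothesis corner : forall m (t u : 'I_s), m \in M -> (t <= u)%N -> lact (e t) (ract m (e u)) = 0.

Let inA := inA A.

Lemma mul_suml I (r : seq I) (P : pred I) g z :
  mul (\sum_(i <- r | P i) g i) z = \sum_(i <- r | P i) mul (g i) z.
Proof. exact: (lin_sum (f := fun x => mul x z)). Qed.
Lemma mul_sumr I (r : seq I) (P : pred I) g z :
  mul z (\sum_(i <- r | P i) g i) = \sum_(i <- r | P i) mul z (g i).
Proof. exact: (lin_sum (f := fun x => mul z x)). Qed.
Lemma lact_suml I (r : seq I) (P : pred I) g m :
  lact (\sum_(i <- r | P i) g i) m = \sum_(i <- r | P i) lact (g i) m.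
Proof. exact: (lin_sum (f := fun x => lact x m)). Qed.
Lemma lact_sumr I (r : seq I) (P : pred I) g z :
  lact z (\sum_(i <- r | P i) g i) = \sum_(i <- r | P i) lact z (g i).
Proof. exact: (lin_sum (f := fun x => lact z x)). Qed.
Lemma ract_suml I (r : seq I) (P : pred I) g z :
  ract (\sum_(i <- r | P i) g i) z = \sum_(i <- r | P i) ract (g i) z.
Proof. exact: (lin_sum (f := fun x => ract x z)). Qed.
Lemma ract_sumr I (r : seq I) (P : pred I) g z :
  ract z (\sum_(i <- r | P i) g i) = \sum_(i <- r | P i) ract z (g i).
Proof. exact: (lin_sum (f := fun x => ract z x)). Qed.


Definition shift (b : nat -> T) : nat -> T := fun k => b k.+1.
Definition merge (l : nat) (b : nat -> T) : nat -> T :=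
  fun k => if (k < l)%N then b k else if k == l then mul (b l) (b l.+1) else b k.+1.
Definition ins (j : nat) (x : T) (b : nat -> T) : nat -> T :=
  fun k => if (k < j)%N then b k else if k == j then x else b k.-1.

Ltac tup := apply: functional_extensionality => ?;
  rewrite /setarg /merge /ins /shift;
  repeat match goal with |- context[if ?c then _ else _] => case: (boolP c) => ? end;
  try (by []); try (by exfalso; lia);
  try (match goal with |- ?b ?x = ?b ?y => (have -> : x = y by lia) end; by []);
  try (match goal with |- ?f (?b ?x) (?b ?y) = ?f (?b ?x') (?b ?y') =>
       (have -> : x = x' by lia); (have -> : y = y' by lia) end; by []).

Lemma merge_setarg_hi l d x (b : nat -> T) :
  merge l (setarg b (l.+2 + d) x) = setarg (merge l b) (l.+1 + d) x.
Proof. tup. Qed.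

Lemma inA_setarg N b k x : inA N b -> ((k < N)%N -> x \in A) -> inA N (setarg b k x).
Proof.
move=> hb hx m hm; rewrite /setarg; case: (m =P k) => [Emk|_]; last exact: hb.
by apply: hx; rewrite -Emk.
Qed.

Fixpoint W (j : nat) (H : 'I_s -> (nat -> T) -> U) (b : nat -> T) : U :=
  if j is j'.+1 then
    W j' (fun u b' => \sum_v H v (setarg b' j' (mul (mul (e u) (b' j')) (e v)))) b
  else \sum_t lact (e t) (H t b).

Lemma W_ext N j H1 H2 b :
  (forall t b', inA N b' -> H1 t b' = H2 t b') -> inA N b -> W j H1 b = W j H2 b.
Proof.
elim: j H1 H2 => [|j IH] H1 H2 hH hb /=.
  by apply: eq_bigr => t _; rewrite hH.
apply: IH => // u b' hb'; apply: eq_bigr => v _; apply: hH.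
apply: inA_setarg => // hj; apply: A_mul => //; apply: A_mul => //; exact: hb'.
Qed.

Lemma W_lin j r H1 H2 b :
  W j (fun t b => r *: H1 t b + H2 t b) b = r *: W j H1 b + W j H2 b.
Proof.
elim: j H1 H2 => [|j IH] H1 H2 /=.
  by rewrite scaler_sumr -big_split; apply: eq_bigr => t _; rewrite lact_linr.
rewrite -IH; congr W; apply: functional_extensionality => u.
apply: functional_extensionality => b'.
by rewrite scaler_sumr -big_split.
Qed.

Lemma W_0 j b : W j (fun _ _ => 0) b = 0.
Proof.
have h := W_lin j 1 (fun _ _ => 0) (fun _ _ => 0) b.
have E : (fun (t : 'I_s) (b : nat -> T) => (1 : R) *: (0 : U) + 0) = (fun _ _ => 0).
  by apply: functional_extensionality => t; apply: functional_extensionality => b';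
     rewrite scale1r addr0.
rewrite E scale1r in h.
have: W j (fun _ _ => 0) b + W j (fun _ _ => 0) b - W j (fun _ _ => 0) b
  = W j (fun _ _ => 0) b - W j (fun _ _ => 0) b by rewrite -h.
by rewrite addrK subrr.
Qed.

Lemma dbl0 (v : U) : v = v + v -> v = 0.
Proof.
move=> h; have: v + v - v = v - v by rewrite -h.
by rewrite addrK subrr.
Qed.

Lemma W_eq j H1 H2 b : (forall t b', H1 t b' = H2 t b') -> W j H1 b = W j H2 b.
Proof.
move=> h; congr W; apply: functional_extensionality => t.
by apply: functional_extensionality => b'.
Qed.

Lemma W_add j H1 H2 b : W j (fun t b => H1 t b + H2 t b) b = W j H1 b + W j H2 b.
Proof. by rewrite -(scale1r (W j H1 b)) -W_lin; apply: W_eq => t b'; rewrite scale1r. Qed.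

Lemma W_scale j r H b : W j (fun t b => r *: H t b) b = r *: W j H b.
Proof.
have := W_lin j r H (fun _ _ => 0) b; rewrite W_0 addr0 => <-.
by apply: W_eq => t b'; rewrite addr0.
Qed.

Lemma W_sum j I (r : seq I) (P : pred I) (H : I -> 'I_s -> (nat -> T) -> U) b :
  W j (fun t b => \sum_(i <- r | P i) H i t b) b = \sum_(i <- r | P i) W j (H i) b.
Proof.
elim: r => [|x r IH].
  rewrite big_nil; transitivity (W j (fun _ _ => 0) b); last exact: W_0.
  by apply: W_eq => t b'; rewrite big_nil.
rewrite big_cons; case: ifP => Px.
  by rewrite -IH -W_add; apply: W_eq => t b'; rewrite big_cons Px.
by rewrite -IH; apply: W_eq => t b'; rewrite big_cons Px.
Qed.

Definition stp j (H : 'I_s -> (nat -> T) -> U) : 'I_s -> (nat -> T) -> U :=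
  fun u b' => \sum_v H v (setarg b' j (mul (mul (e u) (b' j)) (e v))).

Lemma WS j H b : W j.+1 H b = W j (stp j H) b.
Proof. by []. Qed.

Definition ML N k (G : (nat -> T) -> U) := forall b r x y, inA N b -> x \in A -> y \in A ->
  G (setarg b k (r *: x + y)) = r *: G (setarg b k x) + G (setarg b k y).

Lemma setargC (b : nat -> T) j k x y : j != k ->
  setarg (setarg b j x) k y = setarg (setarg b k y) j x.
Proof. move=> hjk; tup. Qed.
Lemma setargK (b : nat -> T) j x y : setarg (setarg b j x) j y = setarg b j y.
Proof. tup. Qed.
Lemma setargE (b : nat -> T) j x : setarg b j x j = x.
Proof. by rewrite /setarg eqxx. Qed.
Lemma setargN (b : nat -> T) j k x : k != j -> setarg b j x k = b k.
Proof. by rewrite /setarg => /negbTE ->. Qed.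

Lemma ML_0 N k G b : ML N k G -> inA N b -> G (setarg b k 0) = 0.
Proof.
move=> hG hb; apply: dbl0.
by have := hG b 1 0 0 hb A0 A0; rewrite scale1r addr0 scale1r.
Qed.

Lemma ML_sum N k G b I (r : seq I) (P : pred I) (x : I -> T) :
  ML N k G -> inA N b -> (forall i, x i \in A) ->
  G (setarg b k (\sum_(i <- r | P i) x i)) = \sum_(i <- r | P i) G (setarg b k (x i)).
Proof.
move=> hG hb hx.
have sA : forall r', \sum_(i <- r' | P i) x i \in A.
  elim=> [|y r' IH]; first by rewrite big_nil.
  rewrite big_cons; case: ifP => _ //.
  by rewrite -(scale1r (x y)); apply: A_lin.
elim: r => [|y r IH]; first by rewrite !big_nil (ML_0 hG hb).
rewrite !big_cons; case: ifP => _ //.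
by rewrite -IH -{1}(scale1r (x y)) hG // scale1r.
Qed.

Lemma stp_ML N j k H : (forall t, ML N k (H t)) -> forall u, ML N k (stp j H u).
Proof.
move=> hH u b r x y hb hx hy; rewrite /stp.
case: (eqVneq j k) => [ejk|hjk].
  subst k.
  rewrite scaler_sumr -big_split; apply: eq_bigr => v _; rewrite !setargE !setargK.
  rewrite mul_linr mul_linl hH //; apply: A_mul => //; exact: A_mul.
rewrite scaler_sumr -big_split; apply: eq_bigr => v _.
have hkj : k != j by rewrite eq_sym.
rewrite !(setargN _ _ hjk) !(setargC _ _ _ hkj) hH //.
apply: inA_setarg => // hjN; apply: A_mul => //; apply: A_mul => //; exact: hb.
Qed.

Lemma W_ML N k j H : (forall t, ML N k (H t)) -> ML N k (W j H).
Proof.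
elim: j H => [|j IH] H hH.
  move=> b r x y hb hx hy /=.
  rewrite scaler_sumr -big_split; apply: eq_bigr => t _; by rewrite hH // lact_linr.
by move=> *; rewrite !WS; apply: IH => //; exact: stp_ML.
Qed.

Lemma W_dep N j H b1 b2 :
  (forall t c1 c2, (forall k, (k < N)%N -> c1 k = c2 k) -> H t c1 = H t c2) ->
  (forall k, (k < N)%N -> b1 k = b2 k) -> W j H b1 = W j H b2.
Proof.
elim: j H => [|j IH] H hH hb /=.
  by apply: eq_bigr => t _; rewrite (hH t b1 b2).
apply: IH => // u c1 c2 hc; apply: eq_bigr => v _; apply: hH => k hk.
rewrite /setarg; case: (k =P j) => [Ekj|_]; last exact: hc.
subst k; case: (ltnP j N) => hjN; first by rewrite hc.
by move: hk; rewrite ltnNge hjN.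
Qed.

Lemma W_tail j (phi : (nat -> T) -> nat -> T) G a :
  (forall b k x, (k < j)%N -> phi (setarg b k x) = setarg (phi b) k x) ->
  (forall b k, (k < j)%N -> phi b k = b k) ->
  W j (fun t b => G t (phi b)) a = W j G (phi a).
Proof.
elim: j G => [|j IH] G h1 h2 //.
rewrite !WS; transitivity (W j (fun u b => stp j G u (phi b)) a).
  by apply: W_eq => u b; rewrite /stp; apply: eq_bigr => v _; rewrite h1 // h2.
apply: IH => [b k x hk|b k hk]; [apply: h1 | apply: h2]; exact: ltnW.
Qed.

Lemma W_ract j G a p : (j <= p)%N -> a p \in A ->
  W j (fun t b => ract (G t b) (b p)) a = ract (W j G a) (a p).
Proof.
elim: j G => [|j IH] G hjp hap /=.
  by rewrite ract_suml; apply: eq_bigr => t _; rewrite lractC.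
rewrite -IH 1?ltnW //; apply: W_eq => u b; rewrite ract_suml; apply: eq_bigr => v _.
by rewrite setargN // neq_ltn hjp orbT.
Qed.

Lemma shift_setarg0 (b : nat -> T) x : shift (setarg b 0 x) = shift b.
Proof. tup. Qed.
Lemma shift_setargS (b : nat -> T) j x : shift (setarg b j.+1 x) = setarg (shift b) j x.
Proof. tup. Qed.

Lemma W_shift j G a : a 0%N \in A ->
  W j.+1 (fun t b => lact (b 0%N) (G t (shift b))) a = lact (a 0%N) (W j G (shift a)).
Proof.
move=> ha0; elim: j G => [|j IH] G.
  rewrite WS /= /stp lact_sumr.
  transitivity (\sum_u \sum_v lact (mul (mul (e u) (a 0%N)) (e v)) (G v (shift a))).
    apply: eq_bigr => u _; rewrite lact_sumr; apply: eq_bigr => v _.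
    rewrite setargE shift_setarg0 lactA // -!mulA e_mul eqxx //.
  rewrite exchange_big; apply: eq_bigr => v _.
  by rewrite -lact_suml -mul_suml sum_el -lactA.
rewrite [LHS]WS [in RHS]WS -IH; apply: W_eq => u b; rewrite /stp lact_sumr; apply: eq_bigr => v _.
by rewrite setargN // shift_setargS.
Qed.

Lemma W_last j G a :
  W j.+1 (fun t b => G (setarg b j (mul (b j) (e t)))) a = W j.+1 (fun _ b => G b) a.
Proof.
rewrite !WS; apply: W_eq => u b; rewrite /stp; apply: eq_bigr => v _.
by rewrite setargK setargE mulA e_mul eqxx.
Qed.

Lemma W_next N j G a : (j < N)%N -> ML N j G -> inA N a ->
  W j (fun t b => G (setarg b j (mul (e t) (b j)))) a = W j.+1 (fun _ b => G b) a.
Proof.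
move=> hj hG ha; rewrite WS; apply: (W_ext (N := N)) => // u b hb.
rewrite /stp -(ML_sum _ _ hG hb) ?sum_er // => v.
apply: A_mul => //; apply: A_mul => //; exact: hb.
Qed.

Lemma merge_setarg2 (b : nat -> T) l x y :
  merge l (setarg (setarg b l x) l.+1 y) = setarg (merge l b) l (mul x y).
Proof. tup. Qed.
Lemma merge_setarg_lo (b : nat -> T) l k x : (k < l)%N ->
  merge l (setarg b k x) = setarg (merge l b) k x.
Proof. move=> hk; tup. Qed.
Lemma merge_lo (b : nat -> T) l k : (k < l)%N -> merge l b k = b k.
Proof. by move=> hk; rewrite /merge hk. Qed.

Lemma inA_merge N l b : inA N.+1 b -> inA N (merge l b).
Proof.
move=> hb k hk; rewrite /merge; case: ifP => h1; first by apply: hb; lia.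
case: eqP => h2; last by apply: hb; lia.
by subst k; apply: A_mul; apply: hb; lia.
Qed.

Lemma sum_mid X Y : \sum_u mul (mul X (e u)) (mul (e u) Y) = mul X Y.
Proof.
transitivity (\sum_u mul X (mul (e u) Y)); last by rewrite -mul_sumr sum_el.
by apply: eq_bigr => u _; rewrite mulA -(mulA (e u)) e_mul eqxx.
Qed.

Lemma W_merge N l d G a : (l < N)%N -> (forall t, ML N l (G t)) -> inA N.+1 a ->
  W (l.+2 + d) (fun t b => G t (merge l b)) a = W (l.+1 + d) G (merge l a).
Proof.
move=> hl hG ha; elim: d G hG => [|d IH] G hG.
  rewrite !addn0 !WS.
  transitivity (W l (fun w b => stp l G w (merge l b)) a); last first.
    apply: W_tail => [b k x hk|b k hk]; [exact: merge_setarg_lo | exact: merge_lo].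
  apply: (W_ext (N := N.+1)) => // w b hb; rewrite /stp.
  transitivity (\sum_u \sum_v G v (setarg (merge l b) l
       (mul (mul (mul (e w) (b l)) (e u)) (mul (mul (e u) (b l.+1)) (e v))))).
    apply: eq_bigr => u _; apply: eq_bigr => v _.
    by rewrite setargN ?merge_setarg2 // neq_ltn ltnSn orbT.
  rewrite exchange_big; apply: eq_bigr => v _.
  have hm := inA_merge l hb.
  rewrite -(ML_sum _ _ (hG v) hm); last first.
    move=> u; apply: A_mul; apply: A_mul => //; try apply: A_mul => //; apply: hb; lia.
  congr (G v (setarg _ l _)).
  under eq_bigr => u _ do rewrite (mulA (e u)).
  by rewrite sum_mid /merge ltnn eqxx !mulA.
rewrite !addnS [LHS]WS [in RHS]WS -IH; last by move=> t; exact: stp_ML.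
apply: W_eq => u b; rewrite /stp; apply: eq_bigr => v _.
rewrite merge_setarg_hi; congr (G v (setarg _ _ (mul (mul _ _) _))).
by rewrite /merge; case: ifP => ?; [lia | case: eqP => ?; [lia | rewrite addSn]].
Qed.

Lemma shift_ins j x (b : nat -> T) : shift (ins j.+1 x b) = ins j x (shift b).
Proof. tup. Qed.
Lemma shift_ins0 x (b : nat -> T) : shift (ins 0 x b) = b.
Proof. tup. Qed.
Lemma merge_ins_lo l j x (b : nat -> T) : (l.+1 < j)%N ->
  merge l (ins j x b) = ins j.-1 x (merge l b).
Proof. move=> h; tup. Qed.
Lemma merge_ins_eq1 j x (b : nat -> T) : merge j (ins j.+1 x b) = setarg b j (mul (b j) x).
Proof. tup. Qed.
Lemma merge_ins_eq j x (b : nat -> T) : merge j (ins j x b) = setarg b j (mul x (b j)).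
Proof. tup. Qed.
Lemma merge_ins_hi l j x (b : nat -> T) : (j < l)%N ->
  merge l (ins j x b) = ins j x (merge l.-1 b).
Proof. move=> h; tup. have -> : l.+1.-1 = l.-1.+1 by lia. by []. Qed.
Lemma ins_setarg_lo j k x z (b : nat -> T) : (k < j)%N ->
  ins j x (setarg b k z) = setarg (ins j x b) k z.
Proof. move=> h; tup. Qed.
Lemma ins_setarg_hi j k x z (b : nat -> T) : (j <= k)%N ->
  ins j x (setarg b k z) = setarg (ins j x b) k.+1 z.
Proof. move=> h; tup. Qed.
Lemma merge_setarg_hi2 l k x (b : nat -> T) : (l < k)%N ->
  merge l (setarg b k.+1 x) = setarg (merge l b) k x.
Proof. move=> h; tup. Qed.
Lemma merge_hi l k (b : nat -> T) : (l < k)%N -> merge l b k = b k.+1.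
Proof. by move=> h; rewrite /merge ltnNge ltnW //= gtn_eqF. Qed.

Lemma inA_ins N j x b : (j <= N)%N -> inA N b -> x \in A -> inA N.+1 (ins j x b).
Proof.
move=> hj hb hx k hk; rewrite /ins; case: ifP => h1; first by apply: hb; lia.
by case: eqP => h2 //; apply: hb; lia.
Qed.

Lemma W_M j H b : W j H b \in M.
Proof.
elim: j H => [|j IH] H //=.
elim/big_rec: _ => [|t x _ hx]; first exact: M0.
by rewrite -(scale1r (lact _ _)); apply: M_lin.
Qed.

Lemma W_zero N j H a : (j <= N)%N -> inA N a ->
  (forall k (t : 'I_s) b, (k < j)%N -> inA N b -> H t (setarg b k 0) = 0) ->
  (forall (t0 t : 'I_s) b, (t0 <= t)%N -> inA N b -> lact (e t0) (H t b) = 0) ->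
  W j H a = 0.
Proof.
move=> hjN ha; elim: j H hjN => [|j IH] H hjN hz hc /=.
  by rewrite big1 // => t _; apply: hc.
apply: IH; first exact: ltnW.
  move=> k u b hk hb; rewrite /stp big1 // => v _.
  rewrite setargN; last by rewrite neq_ltn hk orbT.
  rewrite -setargC; last by rewrite neq_ltn hk orbT.
  apply: hz => //; first exact: ltnW.
  apply: inA_setarg => // _; apply: A_mul => //; apply: A_mul => //; exact: hb.
move=> t0 u b htu hb; rewrite /stp lact_sumr big1 // => v _.
case: (ltnP v u) => hvu.
  rewrite e_tri //; last exact: hb.
  rewrite hz //; exact: (lin0 (f := lact (e t0)) (fun r m m' => lact_linr r (e t0) m m')).
apply: hc; first exact: leq_trans htu hvu.
apply: inA_setarg => // _; apply: A_mul => //; apply: A_mul => //; exact: hb.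
Qed.

Section Main.
Variables (m : nat) (F : (nat -> T) -> U).
Hypothesis hF : hcochain A M m.+1 F.
Hypothesis hZ : forall a, inA m.+2 a -> hcobound mul lact ract m.+1 F a = 0.

Lemma FML k : (k < m.+1)%N -> ML m.+1 k F.
Proof. by case: hF => _ _ h hk b r x y hb hx hy; apply: h. Qed.
Lemma FM b : inA m.+1 b -> F b \in M.
Proof. by case: hF => _ h _; apply: h. Qed.
Lemma Fdep b1 b2 : (forall k, (k < m.+1)%N -> b1 k = b2 k) -> F b1 = F b2.
Proof. by case: hF => h _ _; apply: h. Qed.

Definition Kf j := fun b => W j (fun t c => F (ins j (e t) c)) b.

Lemma Kf_ML j k : (j <= m)%N -> (k < m)%N -> ML m k (Kf j).
Proof.
move=> hj hk; apply: W_ML => t b r x y hb hx hy.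
case: (ltnP k j) => hkj.
  rewrite !ins_setarg_lo //; apply: FML => //; [lia | exact: inA_ins].
rewrite !ins_setarg_hi //; apply: FML => //; exact: inA_ins.
Qed.

Lemma Kf_dep j b1 b2 : (j <= m)%N -> (forall k, (k < m)%N -> b1 k = b2 k) -> Kf j b1 = Kf j b2.
Proof.
move=> hj hb; apply: (W_dep (N := m)) => // t c1 c2 hc; apply: Fdep => k hk.
rewrite /ins; case: ifP => h1; first by apply: hc; lia.
by case: eqP => // h2; apply: hc; lia.
Qed.

Variable a : nat -> T.
Hypothesis ha : inA m.+1 a.

Definition P j := W j (fun _ b => F b) a.
Definition Q := W m.+1 (fun t b => ract (F b) (e t)) a.

Lemma Zexp j : (j <= m.+1)%N ->
  W j (fun t b => lact (ins j (e t) b 0%N) (F (shift (ins j (e t) b)))) a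
  + \sum_(l < m.+1) (-1) ^+ l.+1 *: W j (fun t b => F (merge l (ins j (e t) b))) a
  + (-1) ^+ m.+2 *: W j (fun t b => ract (F (ins j (e t) b)) (ins j (e t) b m.+1)) a = 0.
Proof.
move=> hj.
have h : W j (fun t b => hcobound mul lact ract m.+1 F (ins j (e t) b)) a = 0.
  rewrite -(W_0 j a); apply: (W_ext (N := m.+1)) => // t b hb.
  by apply: hZ; apply: inA_ins.
rewrite -[RHS]h /hcobound W_add W_add W_sum W_scale; congr (_ + _ + _).
by apply: eq_bigr => l _; rewrite W_scale.
Qed.

Lemma T0_0 : W 0 (fun t b => lact (ins 0 (e t) b 0%N) (F (shift (ins 0 (e t) b)))) a = F a.
Proof.
rewrite /= -[RHS](sum_lact (FM ha)); apply: eq_bigr => t _.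
by rewrite shift_ins0 lactA // e_mul eqxx.
Qed.

Lemma T0_S j :
  W j.+1 (fun t b => lact (ins j.+1 (e t) b 0%N) (F (shift (ins j.+1 (e t) b)))) a
  = lact (a 0%N) (Kf j (shift a)).
Proof.
rewrite -W_shift; last exact: ha.
by apply: W_eq => t b; rewrite shift_ins.
Qed.

Lemma Mrg_lo l d : (l.+2 + d <= m.+1)%N ->
  W (l.+2 + d) (fun t b => F (merge l (ins (l.+2 + d) (e t) b))) a = Kf (l.+1 + d) (merge l a).
Proof.
move=> hld.
have hML : forall t, ML m l (fun c => F (ins (l.+1 + d) (e t) c)).
  move=> t c r x y hc hx hy; rewrite !ins_setarg_lo; try lia.
  apply: FML => //; [lia | apply: inA_ins => //; lia].
have hlm : (l < m)%N by lia.
rewrite /Kf -(W_merge d hlm hML ha).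
by apply: W_eq => t b; rewrite merge_ins_lo //; lia.
Qed.

Lemma Mrg_eq1 j : W j.+1 (fun t b => F (merge j (ins j.+1 (e t) b))) a = P j.+1.
Proof.
rewrite /P -W_last; apply: W_eq => t b; by rewrite merge_ins_eq1.
Qed.

Lemma Mrg_eq j : (j < m.+1)%N -> W j (fun t b => F (merge j (ins j (e t) b))) a = P j.+1.
Proof.
move=> hj; rewrite /P -(W_next (N := m.+1)) //; last exact: FML.
by apply: W_eq => t b; rewrite merge_ins_eq.
Qed.

Lemma Mrg_hi l j : (j < l)%N -> W j (fun t b => F (merge l (ins j (e t) b))) a = Kf j (merge l.-1 a).
Proof.
move=> hjl; rewrite /Kf -W_tail.
- by apply: W_eq => t b; rewrite merge_ins_hi.
- move=> b k x hk; apply: merge_setarg_lo; lia.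
- move=> b k hk; apply: merge_lo; lia.
Qed.

Lemma Last_lo j : (j <= m)%N ->
  W j (fun t b => ract (F (ins j (e t) b)) (ins j (e t) b m.+1)) a = ract (Kf j a) (a m).
Proof.
move=> hj; rewrite /Kf -W_ract //; last by apply: ha.
apply: W_eq => t b; congr (ract _ _); rewrite /ins ltnNge ltnW //=.
by rewrite gtn_eqF.
Qed.

Lemma Last_n :
  W m.+1 (fun t b => ract (F (ins m.+1 (e t) b)) (ins m.+1 (e t) b m.+1)) a = Q.
Proof.
apply: W_eq => t b; rewrite {2}/ins ltnn eqxx; congr (ract _ _).
by apply: Fdep => k hk; rewrite /ins hk.
Qed.

Lemma Q0 : Q = 0.
Proof.
apply: (W_zero (N := m.+1)) => // [k t b hk hb | t0 t b htt hb].
  rewrite (ML_0 (FML hk) hb).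
  exact: (lin0 (f := fun m => ract m (e t)) (fun r x y => ract_linl r x y (e t))).
by rewrite corner // FM.
Qed.

Lemma sgS k (v : U) : (-1) ^+ k.+1 *: v = - ((-1) ^+ k *: v).
Proof. by rewrite exprS mulN1r scaleNr. Qed.

Definition X j := lact (a 0%N) (Kf j (shift a)) + \sum_(0 <= l < j) (-1) ^+ l.+1 *: Kf j (merge l a).
Definition Y j := \sum_(j <= l < m) (-1) ^+ l.+1 *: Kf j (merge l a)
  + (-1) ^+ m.+1 *: ract (Kf j a) (a m).

Lemma DXY j : (j <= m)%N -> hcobound mul lact ract m (Kf j) a = X j + Y j.
Proof.
move=> hj; rewrite /hcobound /X /Y.
rewrite -(big_mkord xpredT (fun l => (-1) ^+ l.+1 *: Kf j (merge l a))).
by rewrite (big_cat_nat (leq0n j) hj) !addrA.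
Qed.

Lemma Mrg_lo' l j : (l.+1 < j)%N -> (j <= m.+1)%N ->
  W j (fun t b => F (merge l (ins j (e t) b))) a = Kf j.-1 (merge l a).
Proof.
move=> h1 h2; have [d ed] : exists d, j = (l.+2 + d)%N by exists (j - l.+2)%N; lia.
by subst j; rewrite Mrg_lo.
Qed.

Lemma Z0 : F a - P 1 - Y 0 = 0.
Proof.
have h := Zexp (leq0n m.+1); rewrite T0_0 Last_lo // in h.
rewrite -(big_mkord xpredT (fun l => (-1) ^+ l.+1 *:
   W 0 (fun t b => F (merge l (ins 0 (e t) b))) a)) in h.
rewrite big_ltn // big_add1 Mrg_eq // in h.
have eS : \sum_(0 <= i < m) (-1) ^+ i.+2 *: W 0 (fun t b => F (merge i.+1 (ins 0 (e t) b))) a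
   = - \sum_(0 <= l < m) (-1) ^+ l.+1 *: Kf 0 (merge l a).
  rewrite -sumrN; apply: eq_bigr => l _; rewrite Mrg_hi // sgS //.
rewrite eS expr1 scaleN1r sgS in h.
rewrite -[RHS]h /Y opprD !addrA.
done.
Qed.

Lemma Zi i : (i < m)%N -> X i + (-1) ^+ i.+1 *: (P i.+1 - P i.+2) - Y i.+1 = 0.
Proof.
move=> him.
have hj : (i.+1 <= m.+1)%N by lia.
have h := Zexp hj.
rewrite T0_S Last_lo // in h.
rewrite -(big_mkord xpredT (fun l => (-1) ^+ l.+1 *:
   W i.+1 (fun t b => F (merge l (ins i.+1 (e t) b))) a)) in h.
have him1 : (i <= m.+1)%N by lia.
have h1 : (i < m.+1)%N by lia.
have h2 : (i.+1 < m.+1)%N by lia.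
rewrite (big_cat_nat (leq0n i) him1) (big_ltn h1) (big_ltn h2) in h.
rewrite Mrg_eq1 Mrg_eq // in h.
have eS1 : \sum_(0 <= l < i) (-1) ^+ l.+1 *: W i.+1 (fun t b => F (merge l (ins i.+1 (e t) b))) a
   = \sum_(0 <= l < i) (-1) ^+ l.+1 *: Kf i (merge l a).
  by apply: eq_big_nat => l hl; rewrite Mrg_lo' //; lia.
have eS2 : \sum_(i.+2 <= l < m.+1) (-1) ^+ l.+1 *: W i.+1 (fun t b => F (merge l (ins i.+1 (e t) b))) a
   = - \sum_(i.+1 <= l < m) (-1) ^+ l.+1 *: Kf i.+1 (merge l a).
  rewrite big_add1 -sumrN; apply: eq_big_nat => l hl.
  by rewrite Mrg_hi ?sgS //; lia.
rewrite eS1 eS2 (sgS i.+1 (P i.+2)) (sgS m.+1) in h.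
rewrite -[RHS]h /X /Y scalerBr opprD !addrA.
done.
Qed.

Lemma Zn : X m + (-1) ^+ m.+1 *: (P m.+1 - Q) = 0.
Proof.
have h := Zexp (leqnn m.+1).
rewrite T0_S Last_n big_ord_recr in h.
have eL : W m.+1 (fun t b => F (merge (@ord_max m) (ins m.+1 (e t) b))) a = P m.+1.
  exact: Mrg_eq1.
rewrite eL (sgS m.+1 Q) in h.
have eS1 : \sum_(l < m) (-1) ^+ (widen_ord (leqnSn m) l).+1 *:
     W m.+1 (fun t b => F (merge (widen_ord (leqnSn m) l) (ins m.+1 (e t) b))) a
   = \sum_(0 <= l < m) (-1) ^+ l.+1 *: Kf m (merge l a).
  rewrite big_mkord; apply: eq_bigr => l _; rewrite Mrg_lo' //.
  by rewrite /= ltnS ltn_ord.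
rewrite eS1 in h.
by rewrite -[RHS]h /X scalerBr !addrA.
Qed.

Lemma sgK k (v : U) : (-1) ^+ k *: ((-1) ^+ k *: v) = v.
Proof. by rewrite scalerA -expr2 -exprM mulnC exprM sqrrN !expr1n scale1r. Qed.

Lemma shuffle (F0 P1 P2 x y : U) : F0 - P1 + x + (y + (- x + (P1 - P2))) = F0 - P2 + y.
Proof.
rewrite !addrA [F0 - P1 + x + y]addrAC addrK [F0 - P1 + y + P1]addrAC subrK.
by rewrite addrAC.
Qed.

Lemma step_alg (F0 Pk Pk2 Xk Xk1 Y : U) (c d : R) :
  (forall v : U, d *: (d *: v) = v) -> (forall v : U, d *: v = - (c *: v)) ->
  Y = Xk + d *: (Pk - Pk2) ->
  F0 - Pk + c *: Xk + d *: (Xk1 + Y) = F0 - Pk2 + d *: Xk1.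
Proof.
move=> hdd hdc ->; rewrite !scalerDr hdd (hdc Xk).
by rewrite -(shuffle F0 Pk Pk2 (c *: Xk)) hdd.
Qed.

Lemma tele k : (k <= m)%N ->
  \sum_(j < k.+1) (-1) ^+ j *: hcobound mul lact ract m (Kf j) a
  = F a - P k.+1 + (-1) ^+ k *: X k.
Proof.
elim: k => [|k IH] hk.
  rewrite big_ord1 DXY //.
  have := Z0; move/eqP; rewrite subr_eq0 => /eqP <-.
  by rewrite !expr0 !scale1r addrC.
rewrite big_ord_recr /= IH 1?ltnW // DXY //.
have := Zi hk; move/eqP; rewrite subr_eq0 => /eqP hY.
apply: step_alg => // v; [exact: sgK | exact: sgS].
Qed.

Lemma tele_all : \sum_(j < m.+1) (-1) ^+ j *: hcobound mul lact ract m (Kf j) a = F a.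
Proof.
rewrite tele //.
have := Zn; move/eqP; rewrite addr_eq0 => /eqP ->.
by rewrite sgS opprK sgK Q0 subr0 subrK.
Qed.

End Main.

Lemma sumM I (r : seq I) (c : I -> R) (v : I -> U) :
  (forall i, v i \in M) -> \sum_(i <- r) c i *: v i \in M.
Proof.
move=> hv; elim: r => [|x r IH]; first by rewrite big_nil.
rewrite big_cons; exact: M_lin.
Qed.

Lemma hcob_sum k N (c : 'I_N -> R) (f : 'I_N -> (nat -> T) -> U) b :
  hcobound mul lact ract k (fun x => \sum_j c j *: f j x) b
  = \sum_j c j *: hcobound mul lact ract k (f j) b.
Proof.
rewrite /hcobound; under [RHS]eq_bigr => j _ do rewrite !scalerDr.
rewrite !big_split /=; congr (_ + _ + _).
- rewrite lact_sumr; apply: eq_bigr => j _.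
  exact: (linZ (f := lact (b 0%N)) (fun r x y => lact_linr r (b 0%N) x y)).
- under eq_bigr => l _ do rewrite scaler_sumr.
  under [RHS]eq_bigr => j _ do rewrite scaler_sumr.
  rewrite exchange_big; apply: eq_bigr => j _; apply: eq_bigr => l _.
  by rewrite !scalerA mulrC.
- rewrite ract_suml scaler_sumr; apply: eq_bigr => j _.
  rewrite (linZ (f := fun v => ract v (b k)) (fun r x y => ract_linl r x y (b k))).
  by rewrite !scalerA mulrC.
Qed.

Theorem abs_vanish m F : hcochain A M m.+1 F ->
  (forall a, inA m.+2 a -> hcobound mul lact ract m.+1 F a = 0) ->
  exists g, hcochain A M m g /\ (forall a, inA m.+1 a -> F a = hcobound mul lact ract m g a).
Proof.
move=> hF hZ.
exists (fun b => \sum_(j < m.+1) (-1) ^+ j *: Kf F j b); split; last first.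
  by move=> a ha; rewrite hcob_sum tele_all.
split.
- move=> b1 b2 h; apply: eq_bigr => j _; congr (_ *: _).
  apply: (Kf_dep hF); [by rewrite -ltnS | exact: h].
- by move=> b hb; apply: sumM => j; exact: W_M.
- move=> b k x y r hk hb hx hy.
  rewrite scaler_sumr -big_split; apply: eq_bigr => j _.
  rewrite (Kf_ML hF (ltn_ord j : (j <= m)%N) hk) // scalerDr !scalerA mulrC.
  done.
Qed.

Lemma abs_vanish0 m0 : m0 \in M -> (forall x, x \in A -> lact x m0 = ract m0 x) -> m0 = 0.
Proof.
move=> hm hc; rewrite -(sum_lact hm); apply: big1 => t _.
rewrite hc // -(sum_lact (ract_M m0 (e t))); apply: big1 => u _.
case: (leqP u t) => hut; first exact: corner.
rewrite lractC // hc // ractA // e_mul.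
case: eqP => [eut|_]; first by move: hut; rewrite eut ltnn.
exact: (lin0 (f := ract m0) (fun r x y => ract_linr r m0 x y)).
Qed.

End Abs.

Section Blk.
Variable ns : seq nat.

Definition inb (t i : nat) := (cum ns t <= i < cum ns t.+1)%N.

Lemma cum_le t u : (t <= u)%N -> (cum ns t <= cum ns u)%N.
Proof.
rewrite /cum; elim: ns t u => [|x s IH] [|t] [|u] //= htu.
all: try by [].
by rewrite leq_add2l; apply: IH.
Qed.

Lemma inb_uniq t u i : inb t i -> inb u i -> t = u.
Proof.
rewrite /inb => /andP [h1 h2] /andP [h3 h4].
case: (ltngtP t u) => // htu.
  by have := cum_le htu; lia.
by have := cum_le htu; lia.
Qed.

Lemma inb_ex i : (i < sumn ns)%N -> exists2 t, (t < size ns)%N & inb t i.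
Proof.
rewrite /inb /cum; elim: ns i => [|x s IH] i //= hi.
case: (ltnP i x) => hix.
  exists 0%N => //=; rewrite take0 /=; lia.
have [t ht ht2] := IH (i - x)%N ltac:(lia).
by exists t.+1 => //=; lia.
Qed.

End Blk.

Section Mat.
Variables (R : comPzRingType) (n : nat) (ns : seq nat).
Hypothesis Hsum : sumn ns = n.

Definition eb (t : 'I_(size ns)) : 'M[R]_n := \matrix_(i, j) ((i == j) && inb ns t i)%:R.

Lemma blkzero_intro (i j : 'I_n) (t u : 'I_(size ns)) :
  inb ns t i -> inb ns u j -> (u < t)%N -> blkzero ns i j.
Proof.
rewrite /inb => /andP [h1 h2] /andP [h3 h4] hut; apply/existsP; exists t.
have := cum_le ns hut; rewrite h1 h2 /=; lia.
Qed.

Lemma blkzero_elim (i j : 'I_n) (t u : nat) :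
  blkzero ns i j -> inb ns t i -> inb ns u j -> (u < t)%N.
Proof.
case/existsP => t' /and3P [h1 h2 h3] hti huj.
have ett : nat_of_ord t' = t by apply: (inb_uniq (i := i) _ hti); rewrite /inb h1 h2.
subst t; case: (ltnP u t') => // htu.
move: huj; rewrite /inb => /andP [h4 h5]; have := cum_le ns htu; lia.
Qed.

Lemma blk (i : 'I_n) : exists t : 'I_(size ns), inb ns t i.
Proof.
have hi : (i < sumn ns)%N by rewrite Hsum; exact: ltn_ord i.
have [t ht hti] := inb_ex hi.
by exists (Ordinal ht).
Qed.

Lemma Pn_in (B : 'M[R]_n) : (forall i j, blkzero ns i j -> B i j = 0) -> B \in Pn ns.
Proof.
move=> h; apply/forallP => i; apply/forallP => j; apply/implyP => hz.
by apply/eqP; apply: h.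
Qed.

Lemma Pn_out (B : 'M[R]_n) i j : B \in Pn ns -> blkzero ns i j -> B i j = 0.
Proof. by move/forallP/(_ i)/forallP/(_ j)/implyP => h /h /eqP. Qed.

Lemma Qn_in (B : 'M[R]_n) : (forall i j, ~~ blkzero ns i j -> B i j = 0) -> B \in Qn ns.
Proof.
move=> h; apply/forallP => i; apply/forallP => j; apply/implyP => hz.
by apply/eqP; apply: h.
Qed.

Lemma Qn_out (B : 'M[R]_n) i j : B \in Qn ns -> ~~ blkzero ns i j -> B i j = 0.
Proof. by move/forallP/(_ i)/forallP/(_ j)/implyP => h /h /eqP. Qed.

Lemma projQE (B : 'M[R]_n) i j : projQ ns B i j = if blkzero ns i j then B i j else 0.
Proof. by rewrite mxE. Qed.

Lemma mul_ebl t (x : 'M[R]_n) i j : (eb t *m x) i j = if inb ns t i then x i j else 0.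
Proof.
rewrite mxE (bigD1 i) //= big1 ?addr0 => [|k hk]; first by rewrite mxE eqxx; case: ifP; rewrite ?mul1r ?mul0r.
by rewrite mxE eq_sym (negbTE hk) mul0r.
Qed.

Lemma mul_ebr t (x : 'M[R]_n) i j : (x *m eb t) i j = if inb ns t j then x i j else 0.
Proof.
rewrite mxE (bigD1 j) //= big1 ?addr0 => [|k hk]; first by rewrite mxE eqxx; case: ifP; rewrite ?mulr1 ?mulr0.
by rewrite mxE (negbTE hk) mulr0.
Qed.

Lemma Pn_mul (x y : 'M[R]_n) : x \in Pn ns -> y \in Pn ns -> x *m y \in Pn ns.
Proof.
move=> hx hy; apply: Pn_in => i j hz; rewrite mxE big1 // => k _.
have [t hti] := blk i; have [u huj] := blk j; have [w hwk] := blk k.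
have hut := blkzero_elim hz hti huj.
case: (ltnP w t) => hwt.
  by rewrite (Pn_out hx (blkzero_intro hti hwk hwt)) mul0r.
by rewrite (Pn_out hy (blkzero_intro hwk huj (leq_trans hut hwt))) mulr0.
Qed.

Lemma Pn_lin r (x y : 'M[R]_n) : x \in Pn ns -> y \in Pn ns -> r *: x + y \in Pn ns.
Proof.
move=> hx hy; apply: Pn_in => i j hz.
by rewrite !mxE (Pn_out hx hz) (Pn_out hy hz) mulr0 addr0.
Qed.

Lemma Pn0 : (0 : 'M[R]_n) \in Pn ns.
Proof. by apply: Pn_in => i j _; rewrite mxE. Qed.

Lemma eb_Pn t : eb t \in Pn ns.
Proof.
apply: Pn_in => i j hz; rewrite mxE; case: eqP => [eij|] //=.
subst j; have [u hu] := blk i; have := blkzero_elim hz hu hu; by rewrite ltnn.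
Qed.

Lemma eb_mul t u : eb t *m eb u = if t == u then eb t else 0.
Proof.
apply/matrixP => i j; rewrite mul_ebl; case: (t =P u) => [etu|htu]; rewrite !mxE.
  by subst u; case: (boolP (inb ns t i)) => h; rewrite ?h ?(negbTE h) ?andbT ?andbF.
case: (boolP (inb ns t i)) => ht //; case: (i == j) => //=.
case: (boolP (inb ns u i)) => hu //.
by case: htu; apply: val_inj; apply: (inb_uniq ht hu).
Qed.

Lemma sum_eb : \sum_t eb t = 1%:M.
Proof.
apply/matrixP => i j; rewrite summxE !mxE; case: (i =P j) => [eij|hij].
  subst j; have [t0 h0] := blk i.
  have hz : \sum_(u | u != t0) eb u i i = 0.
    apply: big1 => u hu; rewrite mxE eqxx /=.
    case: (boolP (inb ns u i)) => // h; case/eqP: hu; apply: val_inj.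
    exact: (inb_uniq h h0).
  by rewrite (bigD1 t0) //= hz addr0 mxE eqxx h0.
by rewrite big1 // => t _; rewrite mxE; case: (i =P j).
Qed.

Lemma eb_suml (x : 'M[R]_n) : \sum_t eb t *m x = x.
Proof. by rewrite -mulmx_suml sum_eb mul1mx. Qed.
Lemma eb_sumr (x : 'M[R]_n) : \sum_t x *m eb t = x.
Proof. by rewrite -mulmx_sumr sum_eb mulmx1. Qed.

Lemma eb_tri (x : 'M[R]_n) (u v : 'I_(size ns)) : x \in Pn ns -> (v < u)%N ->
  eb u *m x *m eb v = 0.
Proof.
move=> hx huv; apply/matrixP => i j; rewrite mul_ebr mul_ebl mxE.
case: ifP => hv //; case: ifP => hu //.
exact: (Pn_out hx (blkzero_intro hu hv huv)).
Qed.

Lemma projQ_lin r (B C : 'M[R]_n) : projQ ns (r *: B + C) = r *: projQ ns B + projQ ns C.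
Proof. by apply/matrixP => i j; rewrite !mxE; case: (blkzero ns i j); rewrite ?mulr0 ?addr0. Qed.

Lemma projQ_P (B : 'M[R]_n) : B \in Pn ns -> projQ ns B = 0.
Proof. by move=> hB; apply/matrixP => i j; rewrite !mxE; case: ifP => // /(Pn_out hB). Qed.

Lemma projQ_compl (B : 'M[R]_n) : B - projQ ns B \in Pn ns.
Proof. by apply: Pn_in => i j hz; rewrite !mxE hz subrr. Qed.

Lemma projQ_add (B C : 'M[R]_n) : projQ ns (B + C) = projQ ns B + projQ ns C.
Proof. by have := projQ_lin 1 B C; rewrite !scale1r. Qed.

Lemma projQ_mulPl (x z : 'M[R]_n) : x \in Pn ns -> projQ ns (x *m projQ ns z) = projQ ns (x *m z).
Proof.
move=> hx; rewrite -{2}(subrK (projQ ns z) z) mulmxDr projQ_add.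
by rewrite (projQ_P (Pn_mul hx (projQ_compl z))) add0r.
Qed.

Lemma projQ_mulPr (z y : 'M[R]_n) : y \in Pn ns -> projQ ns (projQ ns z *m y) = projQ ns (z *m y).
Proof.
move=> hy; rewrite -{2}(subrK (projQ ns z) z) mulmxDl projQ_add.
by rewrite (projQ_P (Pn_mul (projQ_compl z) hy)) add0r.
Qed.

Lemma projQ_Qn (B : 'M[R]_n) : projQ ns B \in Qn ns.
Proof. by apply: Qn_in => i j hz; rewrite projQE (negbTE hz). Qed.

Lemma projQ_id (B : 'M[R]_n) : B \in Qn ns -> projQ ns B = B.
Proof.
move=> hB; apply/matrixP => i j; rewrite projQE; case: (boolP (blkzero ns i j)) => // hz.
by rewrite (Qn_out hB hz).
Qed.

Lemma Qn0 : (0 : 'M[R]_n) \in Qn ns.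
Proof. by apply: Qn_in => i j _; rewrite mxE. Qed.

Lemma Qn_lin r (x y : 'M[R]_n) : x \in Qn ns -> y \in Qn ns -> r *: x + y \in Qn ns.
Proof.
move=> hx hy; apply: Qn_in => i j hz.
by rewrite !mxE (Qn_out hx hz) (Qn_out hy hz) mulr0 addr0.
Qed.

Lemma corner (m : 'M[R]_n) (t u : 'I_(size ns)) : (t <= u)%N ->
  lactQ ns (eb t) (ractQ ns m (eb u)) = 0.
Proof.
move=> htu; apply/matrixP => i j; rewrite /lactQ /ractQ projQE mul_ebl projQE mul_ebr mxE.
case: (boolP (blkzero ns i j)) => // hz; case: (boolP (inb ns t i)) => // ht.
case: (boolP (inb ns u j)) => // hu.
by have := blkzero_elim hz ht hu; rewrite ltnNge htu.
Qed.
Let mulM := @mulmx R n n n.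

Lemma c_mul_linl r (x y z : 'M[R]_n) : mulM (r *: x + y) z = r *: mulM x z + mulM y z.
Proof. by rewrite /mulM mulmxDl -scalemxAl. Qed.
Lemma c_mul_linr r (x y z : 'M[R]_n) : mulM x (r *: y + z) = r *: mulM x y + mulM x z.
Proof. by rewrite /mulM mulmxDr -scalemxAr. Qed.
Lemma c_mulA (x y z : 'M[R]_n) : mulM (mulM x y) z = mulM x (mulM y z).
Proof. by rewrite /mulM mulmxA. Qed.
Lemma c_lact_linl r (x y m : 'M[R]_n) : lactQ ns (r *: x + y) m = r *: lactQ ns x m + lactQ ns y m.
Proof. by rewrite /lactQ mulmxDl -scalemxAl projQ_lin. Qed.
Lemma c_lact_linr r (x m m' : 'M[R]_n) : lactQ ns x (r *: m + m') = r *: lactQ ns x m + lactQ ns x m'.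
Proof. by rewrite /lactQ mulmxDr -scalemxAr projQ_lin. Qed.
Lemma c_ract_linl r (m m' x : 'M[R]_n) : ractQ ns (r *: m + m') x = r *: ractQ ns m x + ractQ ns m' x.
Proof. by rewrite /ractQ mulmxDl -scalemxAl projQ_lin. Qed.
Lemma c_ract_linr r (m x y : 'M[R]_n) : ractQ ns m (r *: x + y) = r *: ractQ ns m x + ractQ ns m y.
Proof. by rewrite /ractQ mulmxDr -scalemxAr projQ_lin. Qed.
Lemma c_lactA (x y m : 'M[R]_n) : x \in Pn ns -> lactQ ns x (lactQ ns y m) = lactQ ns (mulM x y) m.
Proof. by move=> hx; rewrite /lactQ projQ_mulPl // /mulM mulmxA. Qed.
Lemma c_ractA (m x y : 'M[R]_n) : y \in Pn ns -> ractQ ns (ractQ ns m x) y = ractQ ns m (mulM x y).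
Proof. by move=> hy; rewrite /ractQ projQ_mulPr // /mulM mulmxA. Qed.
Lemma c_lractC (x m y : 'M[R]_n) : x \in Pn ns -> y \in Pn ns ->
  lactQ ns x (ractQ ns m y) = ractQ ns (lactQ ns x m) y.
Proof. by move=> hx hy; rewrite /lactQ /ractQ projQ_mulPl // projQ_mulPr // mulmxA. Qed.
Lemma c_sum_lact (m : 'M[R]_n) : m \in Qn ns -> \sum_t lactQ ns (eb t) m = m.
Proof.
move=> hm; rewrite /lactQ -(lin_sum (f := projQ ns)); last exact: projQ_lin.
by rewrite -mulmx_suml sum_eb mul1mx projQ_id.
Qed.

End Mat.

Theorem final (R : comPzRingType) (n : nat) (ns : seq nat)
  (Hsum : sumn ns = n) (i : nat) :
  HH_vanishes (@mulmx R n n n) (@Pn R n ns) (@Qn R n ns)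
    (@lactQ R n ns) (@ractQ R n ns) i.
Proof.
case: i => [|j] /=.
  move=> m hm hc.
  apply: (abs_vanish0 (e := @eb R n ns) _ _ _ _ _ _ _ _ hm hc).
  - move=> t; exact: eb_Pn.
  - move=> t u; exact: eb_mul.
  - exact: c_ract_linr.
  - exact: c_ractA.
  - exact: c_lractC.
  - move=> *; exact: projQ_Qn.
  - exact: c_sum_lact.
  - by move=> *; apply: corner.
move=> f hf hz.
apply: (abs_vanish (e := @eb R n ns) _ _ _ _ _ _ _ _ _ _ _ _ _ _ _ _ _ _ _ _ _ hf hz).
- exact: c_mul_linl.
- exact: c_mul_linr.
- exact: c_mulA.
- move=> x y; exact: Pn_mul.
- move=> r x y; exact: Pn_lin.
- exact: Pn0.
- move=> t; exact: eb_Pn.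
- move=> t u; exact: eb_mul.
- move=> x; exact: eb_suml.
- move=> x; exact: eb_sumr.
- move=> x u v; exact: eb_tri.
- exact: c_lact_linl.
- exact: c_lact_linr.
- exact: c_ract_linl.
- exact: c_lactA.
- exact: c_lractC.
- move=> *; exact: projQ_Qn.
- exact: Qn0.
- move=> r x y; exact: Qn_lin.
- exact: c_sum_lact.
- by move=> *; apply: corner.
Qed.

Theorem proposition4p15 (R : comPzRingType) (n : nat) (ns : seq nat)
  (Hpos : all (fun k => (0 < k)%N) ns) (Hsum : sumn ns = n) (i : nat) :
  HH_vanishes (@mulmx R n n n) (@Pn R n ns) (@Qn R n ns)
    (@lactQ R n ns) (@ractQ R n ns) i.
Proof. exact: final. Qed.
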